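(* Let $\mu\in\mathcal{P}(\mathcal{X})$, $0<m_1\le m_2<\infty$, and let $\alpha,\tilde\alpha$ be tail functions with $\mu(B_{m_1})>0$ and $\alpha(r)>0$ for all $r>0$. Then $\mathcal{F}^{\mu}_{\alpha,\tilde\alpha}$ and $\mathcal{G}^{\mu}_{\alpha,\tilde\alpha}$ are cones in $L^2(\mu)$.
   Context: $\mathcal{X}$ is a Polish space with metric $d_{\mathcal{X}}$, $x_0\in\mathcal{X}$ fixed, $B_r=\{x:d_{\mathcal{X}}(x_0,x)\le r\}$, $B_r^{\mathsf c}=\mathcal{X}\setminus B_r$. A tail function is a non-increasing $\alpha:(0,\infty)\to[0,\infty)$ with $\lim_{r\to\infty}\alpha(r)=0$. $\mathcal{F}^{\mu}_{\alpha,\tilde\alpha}$ is the set of $f\in L^2(\mu)$ with $f\mathbf 1_{B_{m_2}}\ge0$ $\mu$-a.s., $\int_{B_r^{\mathsf c}}f_+\,d\mu\le\alpha(r)\int f\,d\mu$ for all $r\ge m_1$, and $\int_{B_r^{\mathsf c}}f_-\,d\mu\le\tilde\alpha(r)\int f\,d\mu$ for all $r\ge m_2$ ($f_+=\max\{f,0\}$, $f_-=-\min\{f,0\}$); $\mathcal{G}^{\mu}_{\alpha,\tilde\alpha}=\{g\in L^2(\mu):\int fg\,d\mu\ge0\text{ for all }f\in\mathcal{F}^{\mu}_{\alpha,\tilde\alpha}\}$. Elements of $L^2(\mu)$ are identified $\mu$-a.s. A cone in a Banach space $\mathsf Y$ is a closed convex set $C$ with $\lambda C\subseteq C$ for all $\lambda>0$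 and $C\cap -C=\{0\}$. *)

(* Defs.v *)
From HB Require Import structures.
From mathcomp Require Import all_boot all_order all_algebra.
From mathcomp Require Import all_classical all_reals all_analysis.
Set Implicit Arguments. Unset Strict Implicit. Unset Printing Implicit Defensive.
Import Order.TTheory GRing.Theory Num.Theory.
Import numFieldNormedType.Exports.
Local Open Scope classical_set_scope.
Local Open Scope ring_scope.

Section Polish.
Context {R : realType} {T : Type} (dX : T -> T -> R).

Definition is_metric : Prop :=
  [/\ forall x y, 0 <= dX x y,
      forall x y, dX x y = 0 <-> x = y,
      forall x y, dX x y = dX y x &
      forall x y z, dX x z <= dX x y + dX y z].

Definition dopen (U : set T) : Prop :=
  forall x, U x -> exists2 e : R, 0 < e & [set y | dX x y < e] `<=` U.

Definition dcauchy (u : nat -> T) : Prop :=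
  forall e : R, 0 < e -> exists N : nat, forall n m, (N <= n)%N -> (N <= m)%N ->
    dX (u n) (u m) < e.

Definition dconverges (u : nat -> T) (x : T) : Prop :=
  forall e : R, 0 < e -> exists N : nat, forall n, (N <= n)%N -> dX (u n) x < e.

Definition dcomplete : Prop :=
  forall u, dcauchy u -> exists x, dconverges u x.

Definition dseparable : Prop :=
  exists D : set T, countable D /\
    forall x (e : R), 0 < e -> exists2 y, D y & dX x y < e.

Definition polish_metric : Prop := [/\ is_metric, dcomplete & dseparable].
End Polish.

Definition polish_borel {disp : measure_display} {T : measurableType disp}
  {R : realType} (dX : T -> T -> R) : Prop :=
  polish_metric dX /\ (@measurable disp T) = <<s dopen dX >>.

Definition Bball {T : Type} {R : realType} (dX : T -> T -> R) (x0 : T) (r : R)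
  : set T := [set x | dX x0 x <= r].

Definition tail_function {R : realType} (alpha : R -> R) : Prop :=
  [/\ forall r, 0 < r -> 0 <= alpha r,
      forall r s, 0 < r -> r <= s -> alpha s <= alpha r &
      alpha x @[x --> +oo] --> 0].

(** * L^2(mu), with elements represented by functions, identified mu-a.e. *)
Section L2.
Context {disp : measure_display} {T : measurableType disp} {R : realType}.
Variable mu : {measure set T -> \bar R}.

Definition L2 (f : T -> R) : Prop := f \in Lfun mu 2%:E.

Definition L2dist (f g : T -> R) : \bar R :=
  'N[mu]_(2%:E)[EFin \o (fun x => f x - g x)].

(** A subset of L^2(mu): a set of L^2 functions stable under mu-a.e. equality
    (i.e. a set of equivalence classes). *)
Definition L2subset (C : set (T -> R)) : Prop :=
  C `<=` L2 /\
  forall f g, C f -> L2 g -> ae_eq mu setT f g -> C g.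

Definition L2cone (C : set (T -> R)) : Prop :=
  [/\ L2subset C,
      (forall (u : nat -> T -> R) (f : T -> R), (forall n, C (u n)) -> L2 f ->
         L2dist (u n) f @[n --> \oo] --> 0%E -> C f),
      (forall f g (t : R), C f -> C g -> 0 <= t <= 1 ->
         C (fun x => t * f x + (1 - t) * g x)),
      (forall (lam : R) f, 0 < lam -> C f -> C (fun x => lam * f x)) &
      (C (fun _ => 0) /\
       forall f, C f -> C (fun x => - f x) -> ae_eq mu setT f (fun _ => 0))].
End L2.

Section FG.
Context {disp : measure_display} {T : measurableType disp} {R : realType}.
Variables (dX : T -> T -> R) (x0 : T) (mu : {measure set T -> \bar R}).
Variables (m1 m2 : R) (alpha alpha' : R -> R).

Local Open Scope ereal_scope.

Definition posp (f : T -> R) : T -> R := fun x => Num.max (f x) 0%R.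
Definition negp (f : T -> R) : T -> R := fun x => Num.max (- f x)%R 0%R.

Definition Fset : set (T -> R) :=
  [set f | L2 mu f /\
    {ae mu, forall x, Bball dX x0 m2 x -> (0 <= f x)%R} /\
    (forall r, (m1 <= r)%R ->
       \int[mu]_(x in ~` Bball dX x0 r) (posp f x)%:E
         <= (alpha r)%:E * \int[mu]_x (f x)%:E) /\
    (forall r, (m2 <= r)%R ->
       \int[mu]_(x in ~` Bball dX x0 r) (negp f x)%:E
         <= (alpha' r)%:E * \int[mu]_x (f x)%:E)].

Definition Gset : set (T -> R) :=
  [set g | L2 mu g /\
    forall f, Fset f -> 0 <= \int[mu]_x (f x * g x)%:E].
End FG.

(* Main.v *)
Require Import Defs.
From HB Require Import structures.
From mathcomp Require Import all_boot all_order all_algebra.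
From mathcomp Require Import all_classical all_reals all_analysis.
From mathcomp Require Import measurable_realfun.
From mathcomp Require Import ring lra.
Import Order.TTheory GRing.Theory Num.Theory.
Import numFieldNormedType.Exports.
Local Open Scope classical_set_scope.
Local Open Scope ring_scope.
Set Implicit Arguments. Unset Strict Implicit.

Section Aux.
Context d (T : measurableType d) (R : realType) (mu : probability T R).
Local Notation L2 := (L2 mu).

Lemma L2_meas f : L2 f -> measurable_fun setT f.
Proof. by rewrite /L2 inE => /andP[]; rewrite inE. Qed.

Lemma L2_L1 f : L2 f -> f \in Lfun mu 1.
Proof. move=> Lf; apply: Lfun_subset12 Lf. by rewrite fin_num_measure. Qed.

Lemma L2_int f : L2 f -> mu.-integrable setT (EFin \o f).
Proof. by move/L2_L1/Lfun1_integrable. Qed.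

Lemma int_sub D (h : T -> \bar R) : measurable D -> mu.-integrable setT h -> mu.-integrable D h.
Proof. by move=> mD; apply: integrableS. Qed.

Lemma intE D h : measurable D -> mu.-integrable D (EFin \o h) ->
  (\int[mu]_(x in D) (h x)%:E)%E = (Rintegral mu D h)%:E.
Proof. by move=> mD ih; rewrite /Rintegral fineK //; exact: integrable_fin_num. Qed.

Lemma L2_lin a b f g : L2 f -> L2 g -> L2 (fun x => a * f x + b * g x).
Proof.
move=> Lf Lg; have [H0 H] := @Lfun_submod_closed _ _ _ mu 2%:E (lee1n 2).
have := H a f (b *: g + 0) Lf (H b g 0 Lg H0).
suff -> : (fun x => a * f x + b * g x) = a *: f + (b *: g + 0) by [].
by apply/funext => x /=; rewrite addr0.
Qed.

Lemma L2_sub f g : L2 f -> L2 g -> L2 (fun x => f x - g x).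
Proof.
move=> Lf Lg; have := L2_lin 1 (-1) Lf Lg.
by congr L2; apply/funext => x; rewrite mul1r mulN1r.
Qed.

Lemma L2_scale a f : L2 f -> L2 (fun x => a * f x).
Proof.
move=> Lf; have := L2_lin a 0 Lf Lf.
by congr L2; apply/funext => x; rewrite mul0r addr0.
Qed.

Lemma L2_opp f : L2 f -> L2 (fun x => - f x).
Proof.
move=> Lf; have := L2_scale (-1) Lf.
by congr L2; apply/funext => x; rewrite mulN1r.
Qed.

Lemma L2_cst c : L2 (fun _ => c).
Proof. exact: (@Lfun_cst _ _ _ mu c 2). Qed.

Lemma L2_dom (f g : T -> R) : L2 g -> measurable_fun setT f ->
  (forall x, `|f x| <= `|g x|) -> L2 f.
Proof.
move=> Lg mf fg; have mg := L2_meas Lg; rewrite /L2 inE; apply/andP; split; first by rewrite inE.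
rewrite inE /= /finite_norm.
move: Lg; rewrite /L2 inE => /andP[_]; rewrite inE /= /finite_norm.
apply: le_lt_trans; rewrite unlock /=.
have mp (h : T -> R) : measurable_fun setT h ->
    measurable_fun setT (EFin \o (fun x => `|h x| `^ 2)).
  move=> mh; apply/measurable_EFinP.
  apply: (measurableT_comp (measurable_powR _)).
  exact: measurableT_comp.
apply: gt0_ler_poweR => //.
all: try by rewrite in_itv /= leey andbT; apply: integral_ge0 => x _ /=; rewrite lee_fin powR_ge0.
apply: ge0_le_integral => //.
- exact: mp.
- exact: mp.
move=> x _; rewrite /= lee_fin; apply: ge0_ler_powR => //; rewrite ?nnegrE //.
Qed.

Lemma L2_fin f : L2 f -> ('N[mu]_2%:E[EFin \o f])%E \is a fin_num.
Proof.
rewrite /L2 inE => /andP[_]; rewrite inE /= /finite_norm => H.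
by rewrite ge0_fin_numE // Lnorm_ge0.
Qed.

Lemma holderR (f h : T -> R) : L2 f -> L2 h ->
  ((Rintegral mu setT (fun x => `|f x * h x|))%:E <=
  (fine ('N[mu]_2%:E[EFin \o f]))%:E * 'N[mu]_2%:E[EFin \o h])%E.
Proof.
move=> Lf Lh.
have H : ('N[mu]_1[EFin \o (f \* h)%R] <= 'N[mu]_2%:E[EFin \o f] * 'N[mu]_2%:E[EFin \o h])%E.
  by apply: (@hoelder _ _ _ _ _ _ 2 2) => //; [exact: L2_meas|exact: L2_meas|rewrite [RHS]splitr !div1r].
rewrite (fineK (L2_fin Lf)).
apply: le_trans H; rewrite Lnorm1 -intE //; last first.
  apply/Lfun1_integrable; apply: Lfun_norm; exact: Lfun2_mul_Lfun1.
Qed.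

Lemma approx (w f0 : T -> R) (u : nat -> T -> R) : L2 w -> L2 f0 -> (forall n, L2 (u n)) ->
  L2dist mu (u n) f0 @[n --> \oo] --> 0%E ->
  forall e, 0 < e -> exists n, Rintegral mu setT (fun x => `|w x * (u n x - f0 x)|) <= e.
Proof.
move=> Lw Lf0 Lu cu e e0.
set c := fine ('N[mu]_2%:E[EFin \o w]).
have c0 : 0 <= c by apply: fine_ge0; apply: Lnorm_ge0.
set e' := e / (c + 1).
have c10 : 0 < c + 1 by lra.
have e'0 : 0 < e' by apply: divr_gt0.
move/fine_cvgP: cu => [_ /cvgrPdist_lt /(_ e' e'0)] [N _ HN].
exists N.
have := HN N (leqnn N); rewrite /= sub0r normrN /L2dist.
have LN := L2_sub (Lu N) Lf0.
have Hf := L2_fin LN.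
have Hh := holderR Lw LN.
rewrite /L2dist -(fineK Hf) in Hh.
have D0 : 0 <= fine ('N[mu]_2%:E[EFin \o (fun x => u N x - f0 x)]).
  by apply: fine_ge0; apply: Lnorm_ge0.
rewrite ger0_norm // => HD.
rewrite -EFinM lee_fin in Hh.
apply: (le_trans Hh).
have : c * fine ('N[mu]_2%:E[EFin \o (fun x => u N x - f0 x)]) <= c * e' by apply: ler_wpM2l => //; exact: ltW.
have : c * e' <= e.
  rewrite /e' mulrA ler_pdivrMr //; nra.
by move=> h1 h2; exact: (le_trans h2 h1).
Qed.

Lemma ae0 (h : T -> R) : measurable_fun setT h -> mu.-integrable setT (EFin \o h) ->
  (forall x, 0 <= h x) -> Rintegral mu setT h = 0 -> {ae mu, forall x, h x = 0}.
Proof.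
move=> mh ih h0 H.
have : (\int[mu]_x `|(h x)%:E| = 0)%E.
  rewrite (eq_integral (fun x => (h x)%:E)); last by move=> x _; rewrite /= ger0_norm.
  by rewrite intE // H.
move=> H'.
have mh' : measurable_fun setT (EFin \o h) by apply/measurable_EFinP.
have := (@ae_eq_integral_abs _ _ _ mu setT measurableT (EFin \o h) mh').1 H'.
by apply: filterS => x /(_ I) /= [].
Qed.
End Aux.

Section Aux2.
Context d (T : measurableType d) (R : realType) (mu : probability T R).
Local Notation L2 := (L2 mu).
Local Notation Rint := (Rintegral mu).

Lemma L2_posp f : L2 f -> L2 (posp f).
Proof.
move=> Lf; apply: (L2_dom Lf).
  by apply: measurable_maxr => //; exact: (L2_meas Lf).
move=> x; rewrite /posp; case: (leP (f x) 0) => h.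
  by rewrite normr0.
by [].
Qed.

Lemma L2_negp f : L2 f -> L2 (negp f).
Proof. by move=> Lf; exact: (L2_posp (L2_opp Lf)). Qed.

Lemma L2_abs f : L2 f -> L2 (fun x => `|f x|).
Proof.
move=> Lf; apply: (L2_dom Lf); last by move=> x; rewrite normr_id.
by apply: measurableT_comp => //; exact: (L2_meas Lf).
Qed.

Lemma L2_intA A f : measurable A -> L2 f -> mu.-integrable A (EFin \o f).
Proof. by move=> mA Lf; apply: int_sub => //; exact: L2_int. Qed.

Lemma mul_int f g : L2 f -> L2 g -> mu.-integrable setT (EFin \o (fun x => f x * g x)).
Proof. by move=> Lf Lg; apply/Lfun1_integrable; exact: Lfun2_mul_Lfun1. Qed.

Lemma mul_abs_int f g : L2 f -> L2 g -> mu.-integrable setT (EFin \o (fun x => `|f x * g x|)).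
Proof.
by move=> Lf Lg; apply/Lfun1_integrable; apply: Lfun_norm; exact: Lfun2_mul_Lfun1.
Qed.

Lemma tailE A (h f : T -> R) a : measurable A -> L2 h -> L2 f ->
  ((\int[mu]_(x in A) (h x)%:E <= a%:E * \int[mu]_x (f x)%:E)%E <->
   Rint A h <= a * Rint setT f).
Proof.
move=> mA Lh Lf; rewrite (intE mA (L2_intA mA Lh)) (intE measurableT (L2_int Lf)).
by rewrite -EFinM lee_fin.
Qed.

Lemma RintLinI A a b h k : measurable A ->
  mu.-integrable setT (EFin \o h) -> mu.-integrable setT (EFin \o k) ->
  Rint A (fun x => a * h x + b * k x) = a * Rint A h + b * Rint A k.
Proof.
move=> mA ih ik.
have ihA := int_sub mA ih; have ikA := int_sub mA ik.
rewrite RintegralD //; last 2 first.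
- exact: (integrableZl mA a ihA).
- exact: (integrableZl mA b ikA).
by rewrite !RintegralZl.
Qed.

Lemma RintNI A h : measurable A -> mu.-integrable setT (EFin \o h) ->
  Rint A (fun x => - h x) = - Rint A h.
Proof.
move=> mA ih; have := RintLinI (-1) 0 mA ih ih.
rewrite mul0r addr0 mulN1r => <-; apply: eq_Rintegral => x _.
by rewrite mul0r addr0 mulN1r.
Qed.

Lemma RintLin A a b f g : measurable A -> L2 f -> L2 g ->
  Rint A (fun x => a * f x + b * g x) = a * Rint A f + b * Rint A g.
Proof. by move=> mA Lf Lg; apply: RintLinI => //; exact: L2_int. Qed.

Lemma RintN A f : measurable A -> L2 f -> Rint A (fun x => - f x) = - Rint A f.
Proof.
move=> mA Lf; have := RintLin (-1) 0 mA Lf Lf.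
rewrite mul0r addr0 mulN1r => <-; apply: eq_Rintegral => x _.
by rewrite mul0r addr0 mulN1r.
Qed.

Lemma Rint0 A : Rint A (fun _ => 0) = 0.
Proof. by rewrite /Rintegral integral0. Qed.

Lemma sub_le A h : measurable A -> L2 h -> (forall x, 0 <= h x) -> Rint A h <= Rint setT h.
Proof.
move=> mA Lh h0; rewrite /Rintegral; apply: fine_le.
- exact: integrable_fin_num (L2_intA mA Lh).
- exact: integrable_fin_num (L2_int Lh).
apply: ge0_subset_integral => //.
- by apply/measurable_EFinP; exact: (L2_meas Lh).
- by move=> x _; rewrite lee_fin.
Qed.

Lemma Rint_ae A h k : measurable A -> measurable_fun setT h -> measurable_fun setT k ->
  {ae mu, forall x, A x -> h x = k x} -> Rint A h = Rint A k.
Proof.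
move=> mA mh mk H; rewrite /Rintegral; congr fine; apply: ae_eq_integral => //.
- by apply/measurable_EFinP; exact: (measurable_funS measurableT (@subsetT _ A) mh).
- by apply/measurable_EFinP; exact: (measurable_funS measurableT (@subsetT _ A) mk).
by apply: filterS H => x H Ax /=; rewrite H.
Qed.

Lemma ae0A A h : measurable A -> L2 h -> (forall x, 0 <= h x) ->
  Rint A h = 0 -> {ae mu, forall x, A x -> h x = 0}.
Proof.
move=> mA Lh h0 H.
have : (\int[mu]_(x in A) `|(h x)%:E| = 0)%E.
  rewrite (eq_integral (fun x => (h x)%:E)); last by move=> x _; rewrite /= ger0_norm.
  by rewrite (intE mA (L2_intA mA Lh)) H.
move=> H'.
have mh' : measurable_fun A (EFin \o h).
  by apply/measurable_EFinP; exact: (measurable_funS measurableT (@subsetT _ A) (L2_meas Lh)).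
have := (@ae_eq_integral_abs _ _ _ mu A mA (EFin \o h) mh').1 H'.
by apply: filterS => x H1 Ax; case: (H1 Ax).
Qed.

Lemma int_le_plus A p q k : measurable A -> L2 p -> L2 q -> L2 k ->
  (forall x, p x <= q x + `|k x|) ->
  Rint A p <= Rint A q + Rint setT (fun x => `|k x|).
Proof.
move=> mA Lp Lq Lk H.
have Lak := L2_abs Lk.
apply: (@le_trans _ _ (Rint A (fun x => 1 * q x + 1 * `|k x|))).
  apply: le_Rintegral => //; [exact: L2_intA|apply: L2_intA => //; exact: L2_lin|].
  by move=> x _; rewrite !mul1r.
rewrite RintLin // !mul1r lerD2l; exact: sub_le.
Qed.

Lemma posp_lip (a b : R) : Num.max a 0 <= Num.max b 0 + `|b - a|.
Proof.
rewrite ge_max; apply/andP; split.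
- have h1 : b <= Num.max b 0 by rewrite le_max lexx.
  have h2 : a - b <= `|b - a| by rewrite distrC ler_norm.
  lra.
- have h1 : 0 <= Num.max b 0 by rewrite le_max lexx orbT.
  have h2 : 0 <= `|b - a| by [].
  lra.
Qed.

Lemma negp_lip (a b : R) : Num.max (- a) 0 <= Num.max (- b) 0 + `|b - a|.
Proof. by have := posp_lip (- a) (- b); rewrite -opprD normrN addrC. Qed.

End Aux2.

Section Ball.
Context d (T : measurableType d) (R : realType) (dX : T -> T -> R).

Lemma mBall x0 r : polish_borel dX -> measurable (Bball dX x0 r).
Proof.
move=> [[[_ _ dsym dtri] _ _] hm].
have hC : dopen dX (~` Bball dX x0 r).
  move=> x /= /negP; rewrite -ltNge => hx.
  exists (dX x0 x - r); first by rewrite subr_gt0.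
  move=> y /= hy; apply/negP; rewrite -ltNge.
  have := dtri x0 y x; rewrite (dsym y x); lra.
have : measurable (~` Bball dX x0 r).
  by rewrite hm; apply: sub_sigma_algebra.
by move/measurableC; rewrite setCK.
Qed.
End Ball.

Section RealAux.
Context (R : realType).

Lemma lim_ineq (P I a : R) : 0 <= a ->
  (forall e, 0 < e -> exists Pn In D, [/\ P <= Pn + D, Pn <= a * In, In <= I + D & D <= e]) ->
  P <= a * I.
Proof.
move=> a0 H; apply/ler_addgt0Pr => e e0.
have a10 : 0 < a + 1 by lra.
have [Pn [In [D [h1 h2 h3 h4]]]] := H (e / (a + 1)) (divr_gt0 e0 a10).
have h5 : a * In <= a * (I + D) by apply: ler_wpM2l.
have h6 : D * (a + 1) <= e by rewrite -ler_pdivlMr.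
nra.
Qed.

Lemma aux_G (a b c D e : R) : 0 <= a -> 1 * a + (-1) * b = c -> c <= D -> D <= e -> 0 <= b + e.
Proof. lra. Qed.

Lemma posp_mul (a : R) : 0 <= Num.max a 0 * a.
Proof. by case: (leP a 0) => h; nra. Qed.

Lemma posp_mul0 (a : R) : Num.max a 0 * a = 0 -> a <= 0.
Proof.
case: (leP a 0) => // h; move/eqP; rewrite mulf_eq0 orbb => /eqP h'.
by move: h; rewrite h' ltxx.
Qed.

Lemma negp0 (a : R) : Num.max (- a) 0 = 0 -> 0 <= a.
Proof. move=> h; have : - a <= Num.max (- a) 0 by rewrite le_max lexx.
by rewrite h; lra. Qed.

Lemma maxge0 (a : R) : 0 <= Num.max a 0.
Proof. by rewrite le_max lexx orbT. Qed.

Lemma posp_conv (s t a b : R) : 0 <= s -> 0 <= t ->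
  Num.max (s * a + t * b) 0 <= s * Num.max a 0 + t * Num.max b 0.
Proof.
move=> s0 t0; rewrite ge_max; apply/andP; split.
- have h1 : s * a <= s * Num.max a 0 by apply: ler_wpM2l => //; rewrite le_max lexx.
  have h2 : t * b <= t * Num.max b 0 by apply: ler_wpM2l => //; rewrite le_max lexx.
  lra.
- have h1 : 0 <= s * Num.max a 0 by apply: mulr_ge0 => //; exact: maxge0.
  have h2 : 0 <= t * Num.max b 0 by apply: mulr_ge0 => //; exact: maxge0.
  lra.
Qed.

Lemma negp_conv (s t a b : R) : 0 <= s -> 0 <= t ->
  Num.max (- (s * a + t * b)) 0 <= s * Num.max (- a) 0 + t * Num.max (- b) 0.
Proof. by move=> s0 t0; rewrite opprD -!mulrN; exact: posp_conv. Qed.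

End RealAux.

Section Main.
Context d (T : measurableType d) (R : realType) (dX : T -> T -> R) (x0 : T)
  (mu : probability T R) (m1 m2 : R) (alpha alpha' : R -> R).
Hypotheses (hP : polish_borel dX) (m10 : 0 < m1) (m12 : m1 <= m2)
  (ta : tail_function alpha) (ta' : tail_function alpha').
Local Notation L2 := (L2 mu).
Local Notation Rint := (Rintegral mu).
Local Notation F := (Fset dX x0 mu m1 m2 alpha alpha').
Local Notation G := (Gset dX x0 mu m1 m2 alpha alpha').
Local Notation B := (Bball dX x0).

Let mB r : measurable (B r) := mBall x0 r hP.
Let mBc r : measurable (~` B r) := measurableC (mB r).

Lemma FsetP f : F f <-> [/\ L2 f, {ae mu, forall x, B m2 x -> 0 <= f x},
  (forall r, m1 <= r -> Rint (~` B r) (posp f) <= alpha r * Rint setT f) &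
  (forall r, m2 <= r -> Rint (~` B r) (negp f) <= alpha' r * Rint setT f)].
Proof.
split.
- move=> [Lf [H1 [H2 H3]]]; split => // r hr.
  + by apply/(tailE _ (mBc r) (L2_posp Lf) Lf); exact: H2.
  + by apply/(tailE _ (mBc r) (L2_negp Lf) Lf); exact: H3.
- move=> [Lf H1 H2 H3]; split => //; split => //; split => r hr.
  + by apply/(tailE _ (mBc r) (L2_posp Lf) Lf); exact: H2.
  + by apply/(tailE _ (mBc r) (L2_negp Lf) Lf); exact: H3.
Qed.

Lemma GsetP g : G g <-> L2 g /\ forall f, F f -> 0 <= Rint setT (fun x => f x * g x).
Proof.
have E f : L2 f -> L2 g -> (0 <= \int[mu]_x (f x * g x)%:E)%E <-> 0 <= Rint setT (fun x => f x * g x).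
  by move=> Lf Lg; rewrite (intE measurableT (mul_int Lf Lg)) lee_fin.
split.
- move=> [Lg H]; split => // f Ff; have [Lf _ _ _] := (FsetP f).1 Ff.
  by apply/(E f Lf Lg); exact: H.
- move=> [Lg H]; split => // f Ff; have [Lf _ _ _] := (FsetP f).1 Ff.
  by apply/(E f Lf Lg); exact: H.
Qed.

Lemma F_L2sub : L2subset mu F.
Proof.
split; first by move=> f /FsetP[].
move=> f g /FsetP[Lf H1 H2 H3] Lg Hfg.
have Hfg' : {ae mu, forall x, f x = g x} by apply: filterS Hfg => x /(_ I).
have ep A : measurable A -> Rint A (posp f) = Rint A (posp g).
  move=> mA; apply: (Rint_ae mA (L2_meas (L2_posp Lf)) (L2_meas (L2_posp Lg))).
  by apply: filterS Hfg' => x e _; rewrite /posp e.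
have en A : measurable A -> Rint A (negp f) = Rint A (negp g).
  move=> mA; apply: (Rint_ae mA (L2_meas (L2_negp Lf)) (L2_meas (L2_negp Lg))).
  by apply: filterS Hfg' => x e _; rewrite /negp e.
have ei : Rint setT f = Rint setT g.
  apply: (Rint_ae measurableT (L2_meas Lf) (L2_meas Lg)).
  by apply: filterS Hfg' => x e _.
apply/FsetP; split => //.
- by apply: filterS2 H1 Hfg' => x h e Bx; rewrite -e; exact: h.
- by move=> r hr; rewrite -ep // -ei //; exact: H2.
- by move=> r hr; rewrite -en // -ei //; exact: H3.
Qed.

Lemma alpha_ge0 r : m1 <= r -> 0 <= alpha r.
Proof. by move=> hr; case: ta => h _ _; apply: h; exact: (lt_le_trans m10 hr). Qed.

Lemma alpha'_ge0 r : m2 <= r -> 0 <= alpha' r.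
Proof. by move=> hr; case: ta' => h _ _; apply: h; exact: (lt_le_trans m10 (le_trans m12 hr)). Qed.

Lemma eq_le_01 (x : R) : x <= 0 -> 0 <= x -> x = 0.
Proof. by move=> h1 h2; apply/eqP; rewrite eq_le h1 h2. Qed.

Lemma Rint_diff u f : L2 u -> L2 f ->
  Rint setT u <= Rint setT f + Rint setT (fun x => `|1 * (u x - f x)|).
Proof.
move=> Lu Lf; apply: int_le_plus => //; first exact: L2_scale (L2_sub Lu Lf).
move=> x; rewrite mul1r; have := ler_norm (u x - f x); lra.
Qed.

Lemma F_closed (u : nat -> T -> R) f : (forall n, F (u n)) -> L2 f ->
  L2dist mu (u n) f @[n --> \oo] --> 0%E -> F f.
Proof.
move=> Fu Lf cu.
have Lu n : L2 (u n) by case/FsetP: (Fu n).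
have ap := approx (L2_cst mu 1) Lf Lu cu.
have Lk n : L2 (fun x => 1 * (u n x - f x)) by exact: L2_scale (L2_sub (Lu n) Lf).
apply/FsetP; split => //.
- have P0 : Rint (B m2) (negp f) <= 0.
    apply/ler_addgt0Pr => e e0; rewrite add0r.
    have [n hn] := ap e e0.
    have [_ Hn _ _] := (FsetP (u n)).1 (Fu n).
    have h0 : Rint (B m2) (negp (u n)) = 0.
      rewrite -(Rint0 mu (B m2)).
      apply: (Rint_ae (mB m2) (L2_meas (L2_negp (Lu n))) (measurable_cst _)).
      apply: filterS Hn => x h Bx; rewrite /negp max_r //; have := h Bx; lra.
    have := int_le_plus (mB m2) (L2_negp Lf) (L2_negp (Lu n)) (Lk n).
    rewrite h0 add0r => H; apply: le_trans (H _) hn => x.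
    by rewrite /negp mul1r; exact: negp_lip.
  have P1 : 0 <= Rint (B m2) (negp f) by apply: Rintegral_ge0 => x _; exact: maxge0.
  have := ae0A (mB m2) (L2_negp Lf) (fun x => maxge0 _) (eq_le_01 P0 P1).
  by apply: filterS => x h Bx; apply: negp0; exact: h.
- move=> r hr; apply: lim_ineq; first exact: alpha_ge0.
  move=> e e0; have [n hn] := ap e e0.
  have [_ _ Hn _] := (FsetP (u n)).1 (Fu n).
  exists (Rint (~` B r) (posp (u n))), (Rint setT (u n)),
    (Rint setT (fun x => `|1 * (u n x - f x)|)); split => //.
  + apply: int_le_plus => //; [exact: L2_posp|exact: L2_posp|].
    by move=> x; rewrite /posp mul1r; exact: posp_lip.
  + exact: Hn.
  + exact: (Rint_diff (Lu n) Lf).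
- move=> r hr; apply: lim_ineq; first exact: alpha'_ge0.
  move=> e e0; have [n hn] := ap e e0.
  have [_ _ _ Hn] := (FsetP (u n)).1 (Fu n).
  exists (Rint (~` B r) (negp (u n))), (Rint setT (u n)),
    (Rint setT (fun x => `|1 * (u n x - f x)|)); split => //.
  + apply: int_le_plus => //; [exact: L2_negp|exact: L2_negp|].
    by move=> x; rewrite /negp mul1r; exact: negp_lip.
  + exact: Hn.
  + exact: (Rint_diff (Lu n) Lf).
Qed.

Lemma F_convex f g t : F f -> F g -> 0 <= t <= 1 ->
  F (fun x => t * f x + (1 - t) * g x).
Proof.
move=> /FsetP[Lf Hf1 Hf2 Hf3] /FsetP[Lg Hg1 Hg2 Hg3] /andP[t0 t1].
have t1' : 0 <= 1 - t by lra.
have Lh := L2_lin t (1 - t) Lf Lg.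
have Ih : Rint setT (fun x => t * f x + (1 - t) * g x) =
    t * Rint setT f + (1 - t) * Rint setT g by exact: RintLin.
apply/FsetP; split => //.
- apply: filterS2 Hf1 Hg1 => x h1 h2 Bx.
  by apply: addr_ge0; apply: mulr_ge0 => //; [exact: h1|exact: h2].
- move=> r hr; have a0 := alpha_ge0 hr.
  have L1 := L2_lin t (1 - t) (L2_posp Lf) (L2_posp Lg).
  apply: (@le_trans _ _ (Rint (~` B r) (fun x => t * posp f x + (1 - t) * posp g x))).
    apply: le_Rintegral => //; [exact: L2_intA (L2_posp Lh)|exact: L2_intA L1|].
    by move=> x _; rewrite /posp; exact: posp_conv.
  rewrite RintLin //; [|exact: L2_posp|exact: L2_posp].
  have := Hf2 r hr; have := Hg2 r hr => h1 h2.
  have h3 := ler_wpM2l t0 h2; have h4 := ler_wpM2l t1' h1.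
  rewrite Ih; nra.
- move=> r hr; have a0 := alpha'_ge0 hr.
  have L1 := L2_lin t (1 - t) (L2_negp Lf) (L2_negp Lg).
  apply: (@le_trans _ _ (Rint (~` B r) (fun x => t * negp f x + (1 - t) * negp g x))).
    apply: le_Rintegral => //; [exact: L2_intA (L2_negp Lh)|exact: L2_intA L1|].
    by move=> x _; rewrite /negp; exact: negp_conv.
  rewrite RintLin //; [|exact: L2_negp|exact: L2_negp].
  have := Hf3 r hr; have := Hg3 r hr => h1 h2.
  have h3 := ler_wpM2l t0 h2; have h4 := ler_wpM2l t1' h1.
  rewrite Ih; nra.
Qed.

Lemma F_homog (lam : R) f : 0 < lam -> F f -> F (fun x => lam * f x).
Proof.
move=> l0 /FsetP[Lf Hf1 Hf2 Hf3].
have Lh := L2_scale lam Lf.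
have Ih : Rint setT (fun x => lam * f x) = lam * Rint setT f.
  by apply: RintegralZl => //; exact: L2_int.
apply/FsetP; split => //.
- apply: filterS Hf1 => x h1 Bx; apply: mulr_ge0; [exact: ltW|exact: h1].
- move=> r hr.
  have -> : Rint (~` B r) (posp (fun x => lam * f x)) = lam * Rint (~` B r) (posp f).
    rewrite -RintegralZl //; last exact: L2_intA (L2_posp Lf).
    by apply: eq_Rintegral => x _; rewrite /posp maxr_pMr ?mulr0 // ltW.
  rewrite Ih; have := Hf2 r hr => h1; have := ler_wpM2l (ltW l0) h1; nra.
- move=> r hr.
  have -> : Rint (~` B r) (negp (fun x => lam * f x)) = lam * Rint (~` B r) (negp f).
    rewrite -RintegralZl //; last exact: L2_intA (L2_negp Lf).
    by apply: eq_Rintegral => x _; rewrite /negp maxr_pMr ?mulr0 ?mulrN // ltW.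
  rewrite Ih; have := Hf3 r hr => h1; have := ler_wpM2l (ltW l0) h1; nra.
Qed.

Lemma F_zero : F (fun _ => 0).
Proof.
apply/FsetP; split; first exact: L2_cst.
- by apply: aeW => x _.
- move=> r hr; rewrite Rint0.
  have -> : Rint (~` B r) (posp (fun _ : T => 0)) = 0.
    by rewrite -[RHS](Rint0 mu (~` B r)); apply: eq_Rintegral => x _; rewrite /posp; case: leP.
  by rewrite mulr0.
- move=> r hr; rewrite Rint0.
  have -> : Rint (~` B r) (negp (fun _ : T => 0)) = 0.
    by rewrite -[RHS](Rint0 mu (~` B r)); apply: eq_Rintegral => x _; rewrite /negp oppr0; case: leP.
  by rewrite mulr0.
Qed.

Lemma F_pointed f : F f -> F (fun x => - f x) -> {ae mu, forall x, setT x -> f x = 0}.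
Proof.
move=> /FsetP[Lf Hf1 Hf2 Hf3] /FsetP[Lg Hg1 Hg2 Hg3].
have h1 := Hf2 m2 m12; have h2 := Hg2 m2 m12.
rewrite (RintN measurableT Lf) in h2.
have P0 : 0 <= Rint (~` B m2) (posp f) by apply: Rintegral_ge0 => x _; exact: maxge0.
have Q0 : 0 <= Rint (~` B m2) (posp (fun x => - f x)) by apply: Rintegral_ge0 => x _; exact: maxge0.
have a0 : 0 <= alpha m2 * Rint setT f by lra.
have a1 : alpha m2 * Rint setT f <= 0 by lra.
have P1 := eq_le_01 (le_trans h1 a1) P0.
have Q1 : Rint (~` B m2) (posp (fun x => - f x)) = 0 by apply: eq_le_01 => //; lra.
have A1 := ae0A (mBc m2) (L2_posp Lf) (fun x => maxge0 _) P1.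
have A2 := ae0A (mBc m2) (L2_posp Lg) (fun x => maxge0 _) Q1.
have A3 : {ae mu, forall x, (~` B m2) x -> f x = 0}.
  apply: filterS2 A1 A2 => x e1 e2 Bx.
  have := e1 Bx; have := e2 Bx; rewrite /posp => k2 k1.
  have := negp0 k2; have : - f x <= Num.max (- f x) 0 by rewrite le_max lexx.
  have : f x <= Num.max (f x) 0 by rewrite le_max lexx.
  rewrite k1; lra.
have A4 : {ae mu, forall x, B m2 x -> f x = 0}.
  apply: filterS2 Hf1 Hg1 => x e1 e2 Bx.
  have := e1 Bx; have := e2 Bx; lra.
apply: filterS2 A3 A4 => x e1 e2 _.
by case: (pselect (B m2 x)) => h; [exact: e2|exact: e1].
Qed.

Lemma F_cone : L2cone mu F.
Proof.
split.
- exact: F_L2sub.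
- move=> u f Fu Lf cu; exact: (F_closed Fu Lf cu).
- move=> f g t Ff Fg ht; exact: F_convex.
- move=> lam f l0 Ff; exact: F_homog.
- split; [exact: F_zero|move=> f Ff Fg; exact: F_pointed].
Qed.

Lemma G_L2sub : L2subset mu G.
Proof.
split; first by move=> g /GsetP[].
move=> g g' /GsetP[Lg H] Lg' Hgg; apply/GsetP; split => // f Ff.
have [Lf _ _ _] := (FsetP f).1 Ff.
rewrite -(@Rint_ae _ _ _ mu setT (fun x => f x * g x)) //.
- exact: H.
- by apply: measurable_funM; [exact: L2_meas Lf|exact: L2_meas Lg].
- by apply: measurable_funM; [exact: L2_meas Lf|exact: L2_meas Lg'].
- by apply: filterS Hgg => x h _; rewrite h.
Qed.

Lemma G_closed (u : nat -> T -> R) g : (forall n, G (u n)) -> L2 g ->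
  L2dist mu (u n) g @[n --> \oo] --> 0%E -> G g.
Proof.
move=> Gu Lg cu.
have Lu n : L2 (u n) by case/GsetP: (Gu n).
apply/GsetP; split => // f Ff.
have [Lf _ _ _] := (FsetP f).1 Ff.
have ap := approx Lf Lg Lu cu.
apply/ler_addgt0Pr => e e0.
have [n hn] := ap e e0.
have h0 : 0 <= Rint setT (fun x => f x * u n x).
  by have [_ HH] := (GsetP (u n)).1 (Gu n); exact: HH.
have E : Rint setT (fun x => 1 * (f x * u n x) + (-1) * (f x * g x)) =
    Rint setT (fun x => f x * (u n x - g x)).
  by apply: eq_Rintegral => x _; rewrite mul1r mulN1r mulrBr.
rewrite RintLinI // in E; [|exact: mul_int|exact: mul_int].
have h1 : Rint setT (fun x => f x * (u n x - g x)) <= Rint setT (fun x => `|f x * (u n x - g x)|).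
  apply: le_Rintegral => //.
  - by apply: mul_int => //; exact: L2_sub.
  - by apply: mul_abs_int => //; exact: L2_sub.
  - by move=> x _; exact: ler_norm.
exact: (aux_G h0 E h1 hn).
Qed.

Lemma G_convex g1 g2 t : G g1 -> G g2 -> 0 <= t <= 1 ->
  G (fun x => t * g1 x + (1 - t) * g2 x).
Proof.
move=> /GsetP[L1 H1] /GsetP[L2' H2] /andP[t0 t1].
have t1' : 0 <= 1 - t by lra.
apply/GsetP; split; first exact: L2_lin.
move=> f Ff; have [Lf _ _ _] := (FsetP f).1 Ff.
have -> : Rint setT (fun x => f x * (t * g1 x + (1 - t) * g2 x)) =
    Rint setT (fun x => t * (f x * g1 x) + (1 - t) * (f x * g2 x)).
  by apply: eq_Rintegral => x _; rewrite mulrDr (mulrCA (f x) t) (mulrCA (f x) (1 - t)).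
rewrite RintLinI //; [|exact: mul_int|exact: mul_int].
by apply: addr_ge0; apply: mulr_ge0 => //; [exact: H1|exact: H2].
Qed.

Lemma G_homog (lam : R) g : 0 < lam -> G g -> G (fun x => lam * g x).
Proof.
move=> l0 /GsetP[Lg H]; apply/GsetP; split; first exact: L2_scale.
move=> f Ff; have [Lf _ _ _] := (FsetP f).1 Ff.
have -> : Rint setT (fun x => f x * (lam * g x)) = Rint setT (fun x => lam * (f x * g x)).
  by apply: eq_Rintegral => x _; rewrite mulrCA.
rewrite RintegralZl //; last exact: mul_int.
by apply: mulr_ge0; [exact: ltW|exact: H].
Qed.

Lemma G_zero : G (fun _ => 0).
Proof.
apply/GsetP; split; first exact: L2_cst.
move=> f Ff; have -> : Rint setT (fun x => f x * 0) = 0.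
  by rewrite -[RHS](Rint0 mu setT); apply: eq_Rintegral => x _; rewrite mulr0.
by [].
Qed.

Lemma L2_indic r : L2 (\1_(B r) : T -> R).
Proof.
apply: (L2_dom (L2_cst mu 1)); first exact: measurable_indic.
by move=> x; rewrite indicE; case: (_ \in _); rewrite /= ?normr0 ?normr1.
Qed.

Lemma indic_ge0' A (x : T) : 0 <= (\1_A x : R).
Proof. by rewrite indicE ler0n. Qed.

Lemma F_build (c R0 : R) (k : T -> R) : 0 <= c -> 0 < R0 -> L2 k ->
  (forall x, 0 <= k x) -> (forall x, ~ B R0 x -> k x = 0) ->
  Rint setT k <= alpha R0 * c * fine (mu (B m1)) ->
  F (fun x => c * \1_(B m1) x + 1 * k x).
Proof.
move=> c0 R00 Lk k0 kout hK.
have Li := L2_indic m1.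
have Lh := L2_lin c 1 Li Lk.
have h0 x : 0 <= c * \1_(B m1) x + 1 * k x.
  by apply: addr_ge0; [apply: mulr_ge0 => //; exact: indic_ge0'|rewrite mul1r].
have mu0 : 0 <= fine (mu (B m1)) by apply: fine_ge0; exact: measure_ge0.
have Ii : Rint setT (\1_(B m1)) = fine (mu (B m1)).
  by rewrite /Rintegral integral_indic // setIT.
have Ih : Rint setT (fun x => c * \1_(B m1) x + 1 * k x) = c * fine (mu (B m1)) + 1 * Rint setT k.
  by rewrite RintLin // Ii.
have Ik0 : 0 <= Rint setT k by apply: Rintegral_ge0 => x _.
have Ih0 : 0 <= Rint setT (fun x => c * \1_(B m1) x + 1 * k x) by apply: Rintegral_ge0 => x _.
apply/FsetP; split => //.
- by apply: aeW => x _.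
- move=> r hr.
  have a0 := alpha_ge0 hr.
  have -> : Rint (~` B r) (posp (fun x => c * \1_(B m1) x + 1 * k x)) = Rint (~` B r) k.
    apply: eq_Rintegral => x; rewrite inE => /= nB.
    have nB1 : ~ B m1 x by rewrite /B /Bball /= => h; apply: nB; rewrite /Bball /=; lra.
    rewrite /posp indicE memNset // mulr0 add0r mul1r.
    by rewrite max_l.
  case: (leP R0 r) => hR.
  + have -> : Rint (~` B r) k = 0.
      rewrite -[RHS](Rint0 mu (~` B r)); apply: eq_Rintegral => x; rewrite inE => /= nB.
      by apply: kout => h; apply: nB; rewrite /Bball /= in h *; lra.
    by apply: mulr_ge0.
  + have hs := sub_le (mBc r) Lk k0.
    have aR : alpha R0 <= alpha r.
      by case: ta => _ h _; apply: h => //; [exact: (lt_le_trans m10 hr)|exact: ltW].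
    have h1 : alpha R0 * (c * fine (mu (B m1))) <= alpha r * (c * fine (mu (B m1))).
      by apply: ler_wpM2r => //; exact: mulr_ge0.
    have h2 : 0 <= alpha r * Rint setT k by exact: mulr_ge0.
    rewrite Ih; rewrite mulrA in h1; nra.
- move=> r hr.
  have -> : Rint (~` B r) (negp (fun x => c * \1_(B m1) x + 1 * k x)) = 0.
    rewrite -[RHS](Rint0 mu (~` B r)); apply: eq_Rintegral => x _.
    by rewrite /negp max_r // oppr_le0.
  by apply: mulr_ge0 => //; exact: alpha'_ge0.
Qed.

Lemma G_pointed g : (0 < mu (B m1))%E -> (forall r, 0 < r -> 0 < alpha r) ->
  G g -> G (fun x => - g x) -> {ae mu, forall x, setT x -> g x = 0}.
Proof.
move=> muB apos /GsetP[Lg H1] /GsetP[_ H2].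
have mufin : mu (B m1) \is a fin_num by exact: fin_num_measure.
have mu0 : 0 < fine (mu (B m1)) by apply: fine_gt0; rewrite muB ltey_eq mufin.
have key q : L2 q -> (forall f, F f -> Rint setT (fun x => f x * q x) = 0) ->
    forall R0, 0 < R0 -> {ae mu, forall x, B R0 x -> q x <= 0}.
  move=> Lq Zq R0 R00.
  have aR := apos R0 R00.
  have Li := L2_indic m1.
  have Z1 : Rint setT (fun x => \1_(B m1) x * q x) = 0.
    have hh : Rint setT (fun _ : T => 0) <= alpha R0 * 1 * fine (mu (B m1)).
      by rewrite Rint0 mulr1; apply: mulr_ge0; exact: ltW.
    have Ff := @F_build 1 R0 (fun _ => 0) ler01 R00 (L2_cst mu 0) (fun _ => lexx 0)
      (fun _ _ => erefl) hh.
    rewrite -(Zq _ Ff); apply: eq_Rintegral => x _.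
    by rewrite mul1r mulr0 addr0.
  pose k := fun x => posp q x * \1_(B R0) x.
  have Lk : L2 k.
    apply: (L2_dom Lq).
      apply: measurable_funM; [exact: L2_meas (L2_posp Lq)|exact: measurable_indic].
    move=> x; rewrite /k /posp indicE; case: (_ \in _); rewrite /= ?mulr0 ?normr0 // mulr1.
    by case: (leP (q x) 0) => h; rewrite ?normr0.
  have k0 x : 0 <= k x by apply: mulr_ge0; [exact: maxge0|exact: indic_ge0'].
  have kout x : ~ B R0 x -> k x = 0 by move=> h; rewrite /k indicE memNset // mulr0.
  pose c := Rint setT k / (alpha R0 * fine (mu (B m1))).
  have c0 : 0 <= c.
    apply: divr_ge0; first by apply: Rintegral_ge0 => x _; exact: k0.
    by apply: mulr_ge0; exact: ltW.
  have hK : Rint setT k <= alpha R0 * c * fine (mu (B m1)).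
    have E1 : alpha R0 * c * fine (mu (B m1)) = c * (alpha R0 * fine (mu (B m1))).
      by rewrite mulrAC mulrC.
    by rewrite E1 /c divfK // gt_eqF // mulr_gt0.
  have Ff := F_build c0 R00 Lk k0 kout hK.
  have Zk : Rint setT (fun x => k x * q x) = 0.
    have := Zq _ Ff.
    have -> : Rint setT (fun x => (c * \1_(B m1) x + 1 * k x) * q x) =
        Rint setT (fun x => c * (\1_(B m1) x * q x) + 1 * (k x * q x)).
      by apply: eq_Rintegral => x _; rewrite mulrDl !mulrA.
    rewrite RintLinI //; [|exact: mul_int|exact: mul_int].
    by rewrite Z1 mulr0 add0r mul1r.
  have kq0 x : 0 <= k x * q x.
    by rewrite /k mulrAC; apply: mulr_ge0; [exact: posp_mul|exact: indic_ge0'].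
  have := ae0 (measurable_funM (L2_meas Lk) (L2_meas Lq)) (mul_int Lk Lq) kq0 Zk.
  apply: filterS => x h Bx; apply: posp_mul0.
  by move: h; rewrite /k /= indicE mem_set //= mulr1.
have Zg f : F f -> Rint setT (fun x => f x * g x) = 0 /\ Rint setT (fun x => f x * - g x) = 0.
  move=> Ff; have [Lf _ _ _] := (FsetP f).1 Ff.
  have a := H1 f Ff; have b := H2 f Ff.
  have e : Rint setT (fun x => f x * - g x) = - Rint setT (fun x => f x * g x).
    rewrite -RintNI //; last exact: mul_int.
    by apply: eq_Rintegral => x _; rewrite mulrN.
  rewrite e in b *.
  have z : Rint setT (fun x => f x * g x) = 0 by apply: eq_le_01 => //; rewrite -oppr_ge0.
  by rewrite z oppr0.
have Lg' := L2_opp Lg.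
have An n : {ae mu, forall x, B n.+1%:R x -> g x = 0}.
  have hn : 0 < n.+1%:R :> R by rewrite ltr0n.
  have := key g Lg (fun f Ff => (Zg f Ff).1) n.+1%:R hn.
  have := key _ Lg' (fun f Ff => (Zg f Ff).2) n.+1%:R hn.
  apply: filterS2 => x h1 h2 Bx; have := h1 Bx; have := h2 Bx; lra.
have := ae_foralln An.
apply: filterS => x h _; apply: (h _); rewrite /Bball /=; apply: ltW.
exact: truncnS_gt.
Qed.

Lemma G_cone : (0 < mu (B m1))%E -> (forall r, 0 < r -> 0 < alpha r) -> L2cone mu G.
Proof.
move=> muB apos; split.
- exact: G_L2sub.
- move=> u f Gu Lf cu; exact: (G_closed Gu Lf cu).
- move=> f g t Gf Gg ht; exact: G_convex.
- move=> lam f l0 Gf; exact: G_homog.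
- split; [exact: G_zero|move=> f Gf Gg; exact: G_pointed].
Qed.

End Main.

Unset Implicit Arguments.
Set Strict Implicit.

Theorem lemma3p1 (disp : measure_display) (T : measurableType disp)
  (R : realType) (dX : T -> T -> R) (x0 : T) (mu : probability T R)
  (m1 m2 : R) (alpha alpha' : R -> R) :
  polish_borel dX ->
  0 < m1 -> m1 <= m2 ->
  tail_function alpha -> tail_function alpha' ->
  (0 < mu (Bball dX x0 m1))%E ->
  (forall r, 0 < r -> 0 < alpha r) ->
  L2cone mu (Fset dX x0 mu m1 m2 alpha alpha') /\
  L2cone mu (Gset dX x0 mu m1 m2 alpha alpha').
Proof.
move=> hP m10 m12 ta ta' muB apos; split.
- exact: F_cone.
- exact: G_cone.
Qed.
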